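(* Let $R$ be a ring and let $\sigma: P_{-1}\to P_0$ be a homomorphism between projective right $R$-modules. Let $\sigma': P_{-1}\to \operatorname{im}\sigma$ be the map obtained from $\sigma$ by restricting its codomain to its image. Then $$\mathcal{D}_\sigma=(\operatorname{Coker}\sigma)^\perp\cap\mathcal{D}_{\sigma'}.$$
   Context: For a homomorphism $\alpha: A\to B$ of right $R$-modules, $\mathcal{D}_\alpha=\{X\in\text{Mod-}R \mid \operatorname{Hom}_R(\alpha,X):\operatorname{Hom}_R(B,X)\to\operatorname{Hom}_R(A,X)\text{ is surjective}\}$. For a module $C$, $C^\perp=\{M\in\text{Mod-}R\mid \operatorname{Ext}^1_R(C,M)=0\}$. *)

(* Defs.v *)
(* Right R-modules are modelled as left modules over the
   converse ring R^c, i.e. objects of type [lmodType R^c]; homomorphisms of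
   right R-modules are [{linear M -> N}] between such modules. *)
From HB Require Import structures.
From mathcomp Require Import all_boot all_algebra.
Set Implicit Arguments. Unset Strict Implicit. Unset Printing Implicit Defensive.
Import GRing.Theory.
Local Open Scope ring_scope.

Notation rmodType R := (lmodType (R^c)%type).

Definition projective (R : pzRingType) (P : rmodType R) : Prop :=
  forall (M N : rmodType R) (g : {linear M -> N}) (f : {linear P -> N}),
    (forall n, exists m, g m = n) ->
    exists h : {linear P -> M}, forall x, g (h x) = f x.

Definition D_class (R : pzRingType) (A B : rmodType R) (alpha : {linear A -> B})
  (X : rmodType R) : Prop :=
  forall f : {linear A -> X}, exists g : {linear B -> X}, forall a, g (alpha a) = f a.

Definition short_exact (R : pzRingType) (M E C : rmodType R)
  (i : {linear M -> E}) (p : {linear E -> C}) : Prop :=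
  injective i /\ (forall c, exists e, p e = c) /\
  (forall e, p e = 0 <-> exists m, i m = e).

(* Ext^1_R(C, M) = 0, via Yoneda Ext^1: every extension of C by M splits. *)
Definition Ext1_zero (R : pzRingType) (C M : rmodType R) : Prop :=
  forall (E : rmodType R) (i : {linear M -> E}) (p : {linear E -> C}),
    short_exact i p -> exists s : {linear C -> E}, forall c, p (s c) = c.

Definition in_perp (R : pzRingType) (C M : rmodType R) : Prop := Ext1_zero C M.

(* Main.v *)
Require Import Defs.
From HB Require Import structures.
From mathcomp Require Import all_boot all_algebra generic_quotient ring_quotient.
Set Implicit Arguments. Unset Strict Implicit. Unset Printing Implicit Defensive.
Import GRing.Theory.
Local Open Scope ring_scope.
Local Open Scope quotient_scope.

Section LQuot.
Variables (S : pzRingType) (V : lmodType S) (K : zmodClosed V) (KZ : forall a v, v \in K -> a *: v \in K).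
Definition lquot := let _ := KZ in Quotient.quot K.
HB.instance Definition _ := GRing.Zmodule.on lquot.
HB.instance Definition _ := EqQuotient.on lquot.

Definition qpi (v : V) : lquot := \pi_lquot v.

Lemma qpiE x y : (qpi x = qpi y) <-> (x - y \in K).
Proof. rewrite /qpi; split.
  by move/eqP; rewrite -Quotient.idealrBE.
by move=> h; apply/eqP; rewrite -Quotient.idealrBE.
Qed.

Lemma qpi_add x y : qpi (x + y) = qpi x + qpi y.
Proof. by rewrite /qpi !piE. Qed.

Lemma qpi_reprK (q : lquot) : qpi (repr q) = q.
Proof. by rewrite /qpi reprK. Qed.

Lemma qpi_surj (q : lquot) : exists v, qpi v = q.
Proof. by exists (repr q); rewrite /qpi reprK. Qed.

Definition qscale (a : S) (q : lquot) : lquot := qpi (a *: repr q).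

Lemma qscale_pi a v : qscale a (qpi v) = qpi (a *: v).
Proof. rewrite /qscale; apply/qpiE; rewrite -scalerBr; apply: KZ.
by apply/qpiE; exact: qpi_reprK.
Qed.

Lemma qscalerA a b q : qscale a (qscale b q) = qscale (a * b) q.
Proof. by have [v <-] := qpi_surj q; rewrite !qscale_pi scalerA. Qed.
Lemma qscale1r : left_id 1 qscale.
Proof. by move=> q; have [v <-] := qpi_surj q; rewrite qscale_pi scale1r. Qed.
Lemma qscalerDr : right_distributive qscale +%R.
Proof. by move=> a q r; have [v <-] := qpi_surj q; have [w <-] := qpi_surj r;
  rewrite -qpi_add !qscale_pi scalerDr qpi_add. Qed.
Lemma qscalerDl v : {morph qscale^~ v: a b / a + b}.
Proof. by move=> a b; have [w <-] := qpi_surj v; rewrite !qscale_pi scalerDl qpi_add. Qed.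

HB.instance Definition _ := GRing.Zmodule_isLmodule.Build S lquot qscalerA qscale1r qscalerDr qscalerDl.

Lemma qpi_linear : linear qpi.
Proof. by move=> a x y; rewrite qpi_add; congr (_ + _); rewrite -qscale_pi. Qed.
End LQuot.
Definition mkLin (S : pzRingType) (U V : lmodType S) (f : U -> V) (H : linear f) := f.
HB.instance Definition _ (S : pzRingType) (U V : lmodType S) (f : U -> V) (H : linear f) :=
  GRing.isLinear.Build S U V *:%R (mkLin H) H.

From Stdlib Require Import ClassicalEpsilon.

Definition pb (P : Prop) : bool := if excluded_middle_informative P then true else false.
Lemma pbP (P : Prop) : pb P <-> P.
Proof. by rewrite /pb; case: excluded_middle_informative. Qed.

Section Push.
Variables (R : pzRingType) (X P0 I C : rmodType R) (g' : {linear I -> X})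
  (iota : {linear I -> P0}) (pi : {linear P0 -> C}).
Hypotheses (iota_inj : injective iota) (pi_surj : forall c, exists y, pi y = c)
  (pi_ker : forall y, pi y = 0 <-> exists z, iota z = y).

Definition Kp : pred (X * P0)%type := fun v => pb (exists y, v = (g' y, - iota y)).
Lemma KpP v : v \in Kp <-> exists y, v = (g' y, - iota y).
Proof. exact: pbP. Qed.

Lemma Kp_zmod : zmod_closed Kp.
Proof.
split.
  by apply/KpP; exists 0; rewrite !linear0.
move=> u v /KpP[y ->] /KpP[z ->]; apply/KpP; exists (y - z).
by apply: injective_projections => /=; rewrite linearB // opprB addrC opprK.
Qed.
HB.instance Definition _ := GRing.isZmodClosed.Build _ Kp Kp_zmod.

Lemma KpZ a v : v \in Kp -> a *: v \in Kp.
Proof.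
move=> /KpP[y ->]; apply/KpP; exists (a *: y).
by apply: injective_projections => /=; rewrite linearZ ?scalerN.
Qed.

Definition Q := lquot KpZ.

Definition iQf (x : X) : Q := qpi KpZ (x, 0).
Lemma iQf_lin : linear iQf.
Proof.
move=> a x y; rewrite /iQf -qpi_linear; congr qpi.
by apply: injective_projections => /=; rewrite ?scaler0 ?addr0.
Qed.
Definition iQ : {linear X -> Q} := mkLin iQf_lin.

Lemma qpi_repr (v : X * P0) : exists y, repr (qpi KpZ v) - v = (g' y, - iota y).
Proof.
apply/KpP; apply/(qpiE KpZ); exact: qpi_reprK.
Qed.

Definition pQf (q : Q) : C := pi (repr q).2.
Lemma pQf_pi v : pQf (qpi KpZ v) = pi v.2.
Proof.
have [y hy] := qpi_repr v.
have: (repr (qpi KpZ v) - v).2 = - iota y by rewrite hy.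
rewrite /= => /eqP; rewrite subr_eq => /eqP hr.
rewrite /pQf hr linearD linearN.
have [_ ->] := pi_ker (iota y); first by rewrite oppr0 add0r.
by exists y.
Qed.

Lemma pQf_lin : linear pQf.
Proof.
move=> a q r; have [v <-] := qpi_surj q; have [w <-] := qpi_surj r.
by rewrite -qpi_linear !pQf_pi /= linearP.
Qed.
Definition pQ : {linear Q -> C} := mkLin pQf_lin.
Lemma pQE q : pQ q = pQf q. Proof. by []. Qed.
Lemma iQE x : iQ x = qpi KpZ (x, 0). Proof. by []. Qed.

Lemma pQ_ses : short_exact iQ pQ.
Proof.
split; [|split].
- move=> x x' /(qpiE KpZ) /KpP[y []] hx hy.
  have : iota y = 0 by rewrite -[iota y]opprK -hy subr0 oppr0.
  rewrite -(linear0 iota) => /iota_inj hy0.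
  by apply/eqP; rewrite -subr_eq0 hx hy0 linear0.
- move=> c; have [y <-] := pi_surj c; exists (qpi KpZ (0, y)).
  by rewrite pQE pQf_pi.
- move=> e; have [[x y] <-] := qpi_surj e; rewrite pQE pQf_pi /=; split.
  + move=> /pi_ker[z hz]; exists (x + g' z); apply/(qpiE KpZ)/KpP; exists z.
    apply: injective_projections => /=.
      by rewrite addrAC subrr add0r.
    by rewrite sub0r hz.
  + move=> [x' /(qpiE KpZ) /KpP[z []] _ h].
    have -> : y = iota z by rewrite -[y]opprK -[iota z]opprK -h sub0r.
    by apply/pi_ker; exists z.
Qed.

Lemma push_ext : Ext1_zero C X -> exists g : {linear P0 -> X}, forall z, g (iota z) = g' z.
Proof.
move=> /(_ Q iQ pQ pQ_ses) [s hs].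
have H : forall y, exists x, iQ x = qpi KpZ (0, y) - s (pi y).
  move=> y; apply pQ_ses.
  by rewrite linearB hs pQE pQf_pi subrr.
pose gf y := proj1_sig (constructive_indefinite_description _ (H y)).
have hgf y : iQ (gf y) = qpi KpZ (0, y) - s (pi y).
  exact: proj2_sig (constructive_indefinite_description _ (H y)).
have iQinj : injective iQ by case: pQ_ses.
have gl : linear gf.
  move=> a y z; apply: iQinj; rewrite linearP !hgf [pi _]linearP [s _]linearP.
  have -> : (0, a *: y + z) = a *: ((0 : X), y) + (0, z).
    by apply: injective_projections => /=; rewrite ?scaler0 ?addr0.
  by rewrite qpi_linear scalerBr opprD addrACA.
exists (mkLin gl) => z /=; apply: iQinj.
rewrite [LHS]hgf.
have [_ ->] := pi_ker (iota z); last by exists z.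
rewrite linear0 subr0; apply/(qpiE KpZ)/KpP; exists (- z).
by apply: injective_projections => /=; rewrite linearN ?opprK ?sub0r ?subr0.
Qed.
End Push.

Theorem lemma2p1 (R : pzRingType) (Pm1 P0 : rmodType R)
  (projPm1 : projective Pm1) (projP0 : projective P0)
  (sigma : {linear Pm1 -> P0})
  (I : rmodType R) (iota : {linear I -> P0}) (sigma' : {linear Pm1 -> I})
  (iota_inj : injective iota)
  (sigma'_surj : forall y : I, exists x, sigma' x = y)
  (sigma_fact : forall x, iota (sigma' x) = sigma x)
  (C : rmodType R) (pi : {linear P0 -> C})
  (pi_surj : forall c : C, exists y, pi y = c)
  (pi_ker : forall y, pi y = 0 <-> exists x, sigma x = y) :
  forall X : rmodType R,
    D_class sigma X <-> (in_perp C X /\ D_class sigma' X).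
Proof.
move=> X; split.
- move=> HD; split.
  + move=> E i p [iinj [psurj pex]].
    have [h hh] := projP0 E C p pi psurj.
    have H1 : forall a, exists m, i m = h (sigma a).
      by move=> a; apply/pex; rewrite hh; apply/pi_ker; exists a.
    pose fm a := proj1_sig (constructive_indefinite_description _ (H1 a)).
    have hfm a : i (fm a) = h (sigma a).
      exact: proj2_sig (constructive_indefinite_description _ (H1 a)).
    have fml : linear fm.
      by move=> a u v; apply: iinj; rewrite linearP !hfm !linearP.
    have [g hg] := HD (mkLin fml).
    pose hf y := h y - i (g y).
    have hfl : linear hf.
      move=> a u v; rewrite /hf [h _]linearP [g _]linearP [i _]linearP.
      by rewrite scalerBr opprD addrACA.
    have hf0 w : pi w = 0 -> hf w = 0.
      move=> /pi_ker [b <-]; rewrite /hf hg /= hfm subrr //.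
    pose yc c := proj1_sig (constructive_indefinite_description _ (pi_surj c)).
    have hyc c : pi (yc c) = c.
      exact: proj2_sig (constructive_indefinite_description _ (pi_surj c)).
    have sl : linear (fun c => hf (yc c)).
      move=> a c d; apply/eqP; rewrite -subr_eq0 -(linearP (mkLin hfl)).
      rewrite -[_ - _](linearB (mkLin hfl)); apply/eqP; apply: hf0.
      by rewrite linearB linearP !hyc subrr.
    exists (mkLin sl) => c /=.
    rewrite /mkLin /hf linearB hh hyc.
    have -> : p (i (g (yc c))) = 0 by apply/pex; eexists.
    by rewrite subr0.
  + move=> f; have [g hg] := HD f.
    have gl : linear (fun y => g (iota y)) by move=> a u v; rewrite !linearP.
    by exists (mkLin gl) => a /=; rewrite /mkLin sigma_fact hg.
- move=> [Hp HD] f.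
  have [g' hg'] := HD f.
  have pk : forall y, pi y = 0 <-> exists z, iota z = y.
    move=> y; rewrite pi_ker; split.
      by move=> [x <-]; exists (sigma' x).
    by move=> [z <-]; have [x <-] := sigma'_surj z; exists x.
  have [g hg] := push_ext g' iota_inj pi_surj pk Hp.
  by exists g => a; rewrite -sigma_fact hg hg'.
Qed.
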